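(* Let $w=w_1\cdots w_n$ be a word of length $n\ge 2$ such that each letter occurs at most $n/4$ times in $w$. Then $f(w)=n+2$. Moreover, for infinitely many $n\ge 2$ there exists a word $w$ of length $n$ in which every letter occurs at most $1+n/4$ times and such that $f(w)>n+2$.
   Context: A word of length $n$ is a sequence $w=w_1w_2\cdots w_n$ of letters (symbols). Let $[n]=\{1,\dots,n\}$. An $n$-grid is a function $G:[n]^2\to\Sigma$, where $\Sigma$ is an arbitrary set of letters. The $i$th row of $G$ contains $w$ if $G(i,j)=w_j$ for all $1\le j\le n$, or $G(i,j)=w_{n-j+1}$ for all $1\le j\le n$. The $j$th column contains $w$ if $G(i,j)=w_i$ for all $i$, or $G(i,j)=w_{n-i+1}$ for all $i$. The main diagonal contains $w$ if $G(i,i)=w_i$ for all $i$ or $G(i,i)=w_{n-i+1}$ for all $i$; the anti-diagonal contains $w$ if $G(i,n-i+1)=w_i$ for all $i$ or $G(i,n-i+1)=w_{n-i+1}$ for all $i$. Let $f(w,G)$ be the number of the $2n+2$ lines ($n$ rows, $n$ columns, $2$ diagonals) of $G$ that contain $w$, and $f(w)=\max_G f(w,G)$ over all $n$-grids $G$. *)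

(* Defs.v *)
From mathcomp Require Import all_boot all_order all_algebra.
Set Implicit Arguments. Unset Strict Implicit. Unset Printing Implicit Defensive.

(* A word of length n over the alphabet T is an n-tuple; an n-grid is an
   n x n matrix with entries in T (indices 0..n-1 instead of 1..n). *)

Section Grid.
Variables (T : finType) (n : nat) (w : n.-tuple T) (G : 'M[T]_n).

Definition row_contains (i : 'I_n) : bool :=
  [forall j, G i j == tnth w j] || [forall j, G i j == tnth w (rev_ord j)].

Definition col_contains (j : 'I_n) : bool :=
  [forall i, G i j == tnth w i] || [forall i, G i j == tnth w (rev_ord i)].

Definition diag_contains : bool :=
  [forall i, G i i == tnth w i] || [forall i, G i i == tnth w (rev_ord i)].

Definition antidiag_contains : bool :=
  [forall i, G i (rev_ord i) == tnth w i] ||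
  [forall i, G i (rev_ord i) == tnth w (rev_ord i)].

Definition fwG : nat :=
  #|[set i | row_contains i]| + #|[set j | col_contains j]|
  + diag_contains + antidiag_contains.
End Grid.

Definition fw (T : finType) (n : nat) (w : n.-tuple T) : nat :=
  \max_(G : 'M[T]_n) fwG w G.

(* Main.v *)
Require Import Defs.
From mathcomp Require Import all_boot all_order all_algebra zify.

Lemma card_countP (n : nat) (P : pred 'I_n) : #|[set i | P i]| = count P (enum 'I_n).
Proof. by rewrite enumT (cardsE P) cardE /enum_mem size_filter. Qed.

Lemma card_tnth (T : finType) n (w : n.-tuple T) a :
  #|[set i : 'I_n | tnth w i == a]| = count_mem a w.
Proof. by rewrite card_countP -[in RHS](map_tnth_enum w) [in RHS]count_map. Qed.

Lemma key (T : finType) n (w : n.-tuple T) (G : 'M[T]_n) j :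
  (forall a, 4 * count_mem a w <= n) -> col_contains w G j ->
  4 * #|[set i | row_contains w G i]| <= 2 * n.
Proof.
move=> Hc Hcol.
set a := tnth w j; set b := tnth w (rev_ord j).
set S := [set i : 'I_n | tnth w i == a] :|: [set i | tnth w i == b].
have HS : #|S| <= count_mem a w + count_mem b w.
  by rewrite -!card_tnth; apply: leq_card_setU.
have Hrow : forall i, row_contains w G i -> (G i j == a) || (G i j == b).
  move=> i /orP[/forallP H|/forallP H]; [by rewrite (H j) | by rewrite (H j) orbT].
have Ha := Hc a; have Hb := Hc b.
case/orP: Hcol => /forallP Hcol.
- have: [set i | row_contains w G i] \subset S.
    by apply/subsetP => i; rewrite !inE => /Hrow; rewrite (eqP (Hcol i)).
  move/subset_leq_card => H. lia.
- have: [set i | row_contains w G i] \subset (@rev_ord n) @^-1: S.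
    by apply/subsetP => i; rewrite !inE => /Hrow; rewrite (eqP (Hcol i)).
  move/subset_leq_card; rewrite card_preimset; last exact: rev_ord_inj.
  move=> H; lia.
Qed.

Lemma row_tr (T : finType) n (w : n.-tuple T) (G : 'M[T]_n) i :
  row_contains w G^T i = col_contains w G i.
Proof. by rewrite /row_contains /col_contains; congr orb; apply: eq_forallb => j; rewrite mxE. Qed.

Lemma col_tr (T : finType) n (w : n.-tuple T) (G : 'M[T]_n) i :
  col_contains w G^T i = row_contains w G i.
Proof. by rewrite /row_contains /col_contains; congr orb; apply: eq_forallb => j; rewrite mxE. Qed.

Lemma upper (T : finType) n (w : n.-tuple T) (G : 'M[T]_n) :
  (forall a, 4 * count_mem a w <= n) -> fwG w G <= n + 2.
Proof.
move=> Hc; rewrite /fwG.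
set R := [set i | row_contains w G i]; set C := [set j | col_contains w G j].
have Hd : (diag_contains w G : nat) <= 1 by case: (diag_contains w G).
have Ha : (antidiag_contains w G : nat) <= 1 by case: (antidiag_contains w G).
have HR : #|R| <= n by rewrite -[X in _ <= X]card_ord max_card.
have HC : #|C| <= n by rewrite -[X in _ <= X]card_ord max_card.
case: (set_0Vmem C) => [C0|[j Hj]].
  rewrite C0 cards0; lia.
case: (set_0Vmem R) => [R0|[i Hi]].
  rewrite R0 cards0; lia.
have H1 : 4 * #|R| <= 2 * n by apply: (@key _ _ w G j) => //; rewrite inE in Hj.
have H2 : 4 * #|C| <= 2 * n.
  have -> : C = [set i | row_contains w G^T i] by apply/setP => k; rewrite !inE row_tr.
  apply: (@key _ _ w G^T i) => //; rewrite col_tr; by rewrite inE in Hi.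
lia.
Qed.

Lemma lower (T : finType) n (w : n.-tuple T) : n + 2 <= fw w.
Proof.
set G := (\matrix_(i < n, j < n) tnth w j)%R.
apply: leq_trans (leq_bigmax G).
rewrite /fwG.
have -> : [set i | row_contains w G i] = setT.
  apply/setP => i; rewrite !inE /row_contains.
  by apply/orP; left; apply/forallP => j; rewrite mxE.
have -> : diag_contains w G.
  by apply/orP; left; apply/forallP => j; rewrite mxE.
have -> : antidiag_contains w G.
  by apply/orP; right; apply/forallP => j; rewrite mxE.
rewrite cardsT card_ord /=. lia.
Qed.

Definition code (k x : nat) : nat :=
  if x <= k then 0 else if 3 * k - 1 <= x then 1 else if x < 2 * k then 2 else 3.

Lemma count_win (P : pred nat) m lo len :
  (forall x, x < m -> P x -> lo <= x < lo + len) -> count P (iota 0 m) <= len.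
Proof.
move=> H; rewrite -size_filter.
have -> : len = size (iota lo len) by rewrite size_iota.
apply: uniq_leq_size; first by rewrite filter_uniq // iota_uniq.
move=> x; rewrite mem_filter mem_iota => /andP[Px]; rewrite add0n => xm.
by rewrite mem_iota; apply: H.
Qed.

Lemma count_code k a : 0 < k -> count (fun x => code k x == a) (iota 0 (4 * k)) <= k.+1.
Proof.
move=> k0.
apply: (@count_win _ _ (if a == 0 then 0 else if a == 1 then 3 * k - 1
                        else if a == 2 then k.+1 else 2 * k) k.+1).
move=> x xm; rewrite /code.
case: a => [|[|[|a]]] /=; repeat case: ifP; move=> *; lia.
Qed.

Lemma count_S k n (P : pred nat) : 0 < k -> n = 4 * k ->
  (forall x, P x = (x <= k) || (3 * k - 1 <= x)) ->
  2 * k + 2 <= count P (iota 0 n).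
Proof.
move=> k0 -> HP.
have -> : 4 * k = k.+1 + (2 * k - 2 + k.+1) by lia.
rewrite !iotaD !count_cat.
rewrite (@eq_in_count _ P predT (iota 0 k.+1)); last first.
  by move=> x; rewrite mem_iota HP => /andP[_ h]; apply/orP; left; lia.
rewrite (@eq_in_count _ P predT (iota (0 + k.+1 + (2 * k - 2)) k.+1)); last first.
  by move=> x; rewrite mem_iota HP => /andP[h _]; apply/orP; right; lia.
rewrite !count_predT !size_iota; lia.
Qed.

Lemma part2 N : exists n : nat, N <= n /\ 2 <= n /\
     exists (T : finType) (w : n.-tuple T),
       (forall a : T, 4 * count_mem a w <= 4 + n) /\ n + 2 < fw w.
Proof.
set k := N.+1.
have k0 : 0 < k by [].
exists (4 * k); split; first lia. split; first lia.
set n := 4 * k.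
have nE : n = 4 * k by [].
exists 'I_4.
set w : n.-tuple 'I_4 := mktuple (fun i : 'I_n => inord (code k i)).
have Hw : forall i, tnth w i = inord (code k i) by move=> i; rewrite tnth_mktuple.
have Hc : forall x, code k x < 4 by move=> x; rewrite /code; repeat case: ifP.
exists w; split.
  move=> a; rewrite -card_tnth card_countP.
  have -> : count (fun i : 'I_n => tnth w i == a) (enum 'I_n)
          = count (fun x => code k x == a) (iota 0 n).
    rewrite -val_enum_ord count_map; apply: eq_count => i /=.
    rewrite Hw; apply/eqP/eqP => [e|e]; first by rewrite -e inordK.
    by apply: val_inj; rewrite /= inordK // e.
  have := @count_code k a k0; rewrite /n; lia.
pose g := fun i j : 'I_n =>
   (if i <= k then tnth w j else if 3 * k - 1 <= i then tnth w (rev_ord j)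
    else if j <= k then tnth w i else tnth w (rev_ord i)).
pose G := (\matrix_(i < n, j < n) g i j)%R.
set S := [set i : 'I_n | (i <= k) || (3 * k - 1 <= i)].
have HS : 2 * k + 2 <= #|S|.
  rewrite card_countP (_ : count _ _ = count (fun x => (x <= k) || (3*k-1 <= x)) (iota 0 n)).
    by apply: (@count_S k n _ k0).
  by rewrite -val_enum_ord count_map.
have HR : S \subset [set i | row_contains w G i].
  apply/subsetP => i; rewrite !inE => /orP[h|h]; apply/orP.
    by left; apply/forallP => j; rewrite mxE /g h.
  right; apply/forallP => j; rewrite mxE /g h.
  have -> : (i <= k) = false by lia.
  by [].
have HC : S \subset [set j | col_contains w G j].
  have E : forall x y : 'I_n, code k x = code k y -> tnth w x == tnth w y.
    by move=> x y e; rewrite !Hw e.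
  apply/subsetP => j; rewrite !inE => /orP[h|h]; apply/orP.
    left; apply/forallP => i; rewrite mxE /g h.
    case: ifP => h1; first by apply: E; rewrite /code; repeat case: ifP; move=> *; lia.
    case: ifP => h2; last by [].
    apply: E; rewrite /code /= in h2 *; repeat case: ifP; move=> *; lia.
  right; apply/forallP => i; rewrite mxE /g.
  have -> : (j <= k) = false by lia.
  case: ifP => h1; first by apply: E; rewrite /code /=; repeat case: ifP; move=> *; lia.
  case: ifP => h2; last by [].
  apply: E; rewrite /code /= in h2 *; repeat case: ifP; move=> *; lia.
apply: leq_trans (leq_bigmax G).
have L : #|S| + #|S| <= fwG w G.
  rewrite /fwG; apply: leq_trans (leq_addr _ _); apply: leq_trans (leq_addr _ _).
  exact: leq_add (subset_leq_card HR) (subset_leq_card HC).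
apply: leq_trans L; lia.
Qed.

Theorem theorem1 :
  (forall (T : finType) (n : nat) (w : n.-tuple T),
     2 <= n -> (forall a : T, 4 * count_mem a w <= n) -> fw w = n + 2)
  /\
  (forall N : nat, exists n : nat, N <= n /\ 2 <= n /\
     exists (T : finType) (w : n.-tuple T),
       (forall a : T, 4 * count_mem a w <= 4 + n) /\ n + 2 < fw w).
Proof.
split; last exact: part2.
move=> T n w _ Hc; apply/eqP; rewrite eqn_leq lower andbT.
by apply/bigmax_leqP => G _; apply: upper.
Qed.
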